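(* There is a polynomial $p$ such that: (1) for every deterministic weak Muller automaton $\mathfrak{A}$ over $\Sigma_I\times\Sigma_O$ with $k$ states (acceptance family in any representation), Player $O$ wins $\Gamma_g(L(\mathfrak{A}))$ for some delay function $g$ if and only if Player $O$ wins $\Gamma_f(L(\mathfrak{A}))$ for some constant delay function $f$ with $f(0)\le 2^{2^{p(k)}}$; (2) for every non-deterministic weak Muller automaton $\mathfrak{A}$ over $\Sigma_I\times\Sigma_O$ with $k$ states, Player $O$ wins $\Gamma_g(L(\mathfrak{A}))$ for some delay function $g$ if and only if Player $O$ wins $\Gamma_f(L(\mathfrak{A}))$ for some constant delay function $f$ with $f(0)\le 2^{2^{2^{p(k)}}}$.
   Context: An $\omega$-automaton $\mathfrak{A}=(Q,\Sigma,q_I,\Delta,\mathrm{Acc})$ has finite state set $Q$, alphabet $\Sigma$, initial state $q_I$, transitions $\Delta\subseteq Q\times\Sigma\times Q$, accepting runs $\mathrm{Acc}\subseteq\Delta^\omega$; $L(\mathfrak{A})$ is the set of words processed by an initial accepting run. Deterministic means $\Delta$ is a total function $Q\times\Sigma\to Q$. A weak Muller automaton has $\mathcal{F}\subseteq 2^Q$ and accepts runs whose set of visited states lies in $\mathcal{F}$. A delay function is $f:\mathbb{N}\to\mathbb{N}_{\ge1}$; it is constant if $f(i)=1$ for all $i>0$. In the delay game $\Gamma_f(L)$, $L\subseteq(\Sigma_I\times\Sigma_O)^\omega$, in round $i=0,1,\dots$ Player $I$ picks $u_i\in\Sigma_I^{f(i)}$ and then Player $O$ picks $v_i\in\Sigma_O$;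 $O$ wins the play iff $\binom{u_0u_1\cdots}{v_0v_1\cdots}\in L$. Strategies: $\tau_I:\Sigma_O^*\to\Sigma_I^*$ with $|\tau_I(w)|=f(|w|)$, $\tau_O:\Sigma_I^+\to\Sigma_O$; a player wins the game if she/he has a strategy winning all consistent plays. *)

(* Defs.v *)
From mathcomp Require Import all_boot.
Set Implicit Arguments. Unset Strict Implicit. Unset Printing Implicit Defensive.

Definition polyn (cs : seq nat) (k : nat) : nat :=
  \sum_(i < size cs) nth 0 cs i * k ^ i.

Definition is_delay (f : nat -> nat) : Prop := forall i, 0 < f i.
Definition is_const_delay (f : nat -> nat) : Prop :=
  is_delay f /\ (forall i, 0 < i -> f i = 1).

Section Games.
Variables SI SO : Type.

(* Total number of input letters picked by Player I after rounds 0..i. *)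
Definition lookahead (f : nat -> nat) (i : nat) : nat := \sum_(j < i.+1) f j.

(* A play is determined by Player I's
   input word alpha = u_0 u_1 ... (u_i the block of length f i); in round i
   Player O answers tauO (u_0 ... u_i). *)
Definition winsO (f : nat -> nat) (L : (nat -> SI * SO) -> Prop) : Prop :=
  exists tauO : seq SI -> SO,
    forall alpha : nat -> SI,
      L (fun n => (alpha n, tauO (mkseq alpha (lookahead f n)))).
End Games.

Section Automata.
Variables (A : Type) (Q : finType).

Definition occ (r : nat -> Q) (q : Q) : Prop := exists n, r n = q.
Definition weak_muller_acc (F : {set {set Q}}) (r : nat -> Q) : Prop :=
  exists S, S \in F /\ forall q, q \in S <-> occ r q.

Definition det_run (q0 : Q) (delta : Q -> A -> Q) (w : nat -> A) : nat -> Q :=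
  fix r n := match n with 0 => q0 | n'.+1 => delta (r n') (w n') end.
Definition dwm_lang (q0 : Q) (delta : Q -> A -> Q) (F : {set {set Q}})
  (w : nat -> A) : Prop := weak_muller_acc F (det_run q0 delta w).

Definition nwm_lang (q0 : Q) (Delta : Q -> A -> Q -> bool) (F : {set {set Q}})
  (w : nat -> A) : Prop :=
  exists r : nat -> Q, r 0 = q0 /\ (forall n, Delta (r n) (w n) (r n.+1))
                       /\ weak_muller_acc F r.
End Automata.

(* Main.v *)
Require Import Defs.
From mathcomp Require Import all_boot.
From Stdlib Require Import IndefiniteDescription FunctionalExtensionality.
Set Implicit Arguments. Unset Strict Implicit. Unset Printing Implicit Defensive.

Lemma card_setle (T : finType) : #|{set T}| <= 2 ^ #|T|.
Proof.
have inj : injective (fun A : {set T} => [ffun x => x \in A]).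
  move=> A B /ffunP H; apply/setP => x; have := H x; by rewrite !ffunE.
by have := @leq_card _ _ _ inj; rewrite card_ffun card_bool.
Qed.

Section Abstract.
Variables (SI SO P : finType) (prof : seq (SI * SO) -> P) (comb : P -> P -> P).
Hypothesis prof_cat : forall l1 l2, prof (l1 ++ l2) = comb (prof l1) (prof l2).

Definition typ (x : seq SI) : {set P} :=
  [set p | [exists w : (size x).-tuple SO, prof (zip x w) == p]].

Lemma memtP x p : reflect (exists w, size w = size x /\ prof (zip x w) = p) (p \in typ x).
Proof.
rewrite inE; apply: (iffP existsP) => [[w /eqP <-]|[w [sw <-]]].
  by exists w; rewrite size_tuple.
have sw' : size w == size x by rewrite sw.
by exists (Tuple sw').
Qed.

Lemma typ_cat x z p : (p \in typ (x ++ z)) <->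
  exists p1 p2, p1 \in typ x /\ p2 \in typ z /\ p = comb p1 p2.
Proof.
split.
  move/memtP=> [w [sw <-]].
  exists (prof (zip x (take (size x) w))), (prof (zip z (drop (size x) w))).
  have hx : size x <= size w by rewrite sw size_cat leq_addr.
  split; first by apply/memtP; exists (take (size x) w); rewrite size_takel.
  split; first by apply/memtP; exists (drop (size x) w); rewrite size_drop sw size_cat addKn.
  by rewrite -prof_cat -zip_cat ?cat_take_drop // size_takel.
move=> [p1 [p2 [/memtP[w1 [s1 <-]] [/memtP[w2 [s2 <-]] ->]]]].
apply/memtP; exists (w1 ++ w2); split; first by rewrite !size_cat s1 s2.
by rewrite zip_cat ?s1 // prof_cat.
Qed.

Lemma typ_congr x y z : typ x = typ y -> typ (x ++ z) = typ (y ++ z).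
Proof.
move=> H; apply/setP => p; apply/idP/idP => /typ_cat [p1 [p2 [h1 [h2 ->]]]];
apply/typ_cat; exists p1, p2; by rewrite ?H // -?H.
Qed.

Lemma typ_pow u v k : typ (u ++ v) = typ u -> typ (u ++ flatten (nseq k v)) = typ u.
Proof.
move=> H; elim: k => [|k IH] /=; first by rewrite cats0.
by rewrite catA (typ_congr _ H).
Qed.

Lemma size_fnseq (v : seq SI) k : size (flatten (nseq k v)) = k * size v.
Proof. by elim: k => //= k IH; rewrite size_cat IH mulSn. Qed.

Lemma pump x m : 2 ^ #|P| <= size x -> exists y, typ y = typ x /\ m <= size y.
Proof.
move=> hx.
pose f (i : 'I_(2 ^ #|P|).+1) := typ (take i x).
have : ~~ injectiveb f.
  apply/negP => /injectiveP inj; have := @leq_card _ _ _ inj.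
  rewrite card_ord => H; have := leq_trans H (card_setle P); by rewrite ltnn.
move/injectivePn => [i [j neq eqf]].
wlog lij : i j neq eqf / i < j.
  move=> W; case: (ltngtP i j) => h; first exact: W h.
    by apply: (W j i) => //; rewrite eq_sym.
  by move: neq; rewrite -val_eqE /= h eqxx.
have hj : j <= size x by apply: leq_trans hx; rewrite -ltnS.
pose u := take i x; pose v := drop i (take j x); pose z := drop j x.
have ex : x = u ++ v ++ z.
  by rewrite catA /u /v -{1}(take_takel x (ltnW lij)) cat_take_drop cat_take_drop.
have huv : typ (u ++ v) = typ u.
  by rewrite /u /v -{1}(take_takel x (ltnW lij)) cat_take_drop.
have sv : 0 < size v by rewrite /v size_drop size_takel // subn_gt0.
exists (u ++ flatten (nseq m v) ++ z); split.
  rewrite catA (typ_congr _ (typ_pow m huv)) ex catA (typ_congr _ huv) //.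
rewrite !size_cat size_fnseq; apply: leq_trans (leq_addl _ _); apply: leq_trans (leq_addr _ _).
by rewrite -{1}(muln1 m) leq_mul2l sv orbT.
Qed.

Lemma eq_mkseq_in (T : Type) (f h : nat -> T) n :
  (forall i, i < n -> f i = h i) -> mkseq f n = mkseq h n.
Proof.
move=> H; case: n H => [//|n] H.
apply: (@eq_from_nth _ (f 0)); rewrite ?size_mkseq // => i hi.
by rewrite !nth_mkseq // H.
Qed.

Definition blk (T : Type) (c : nat -> T) s e := mkseq (fun i => c (s + i)) (e - s).

Variable L : (nat -> SI * SO) -> Prop.
Hypothesis transfer : forall (a b : nat -> SI * SO) (B : nat -> nat) (d : nat),
  0 < d -> B 0 = 0 -> (forall j, B j < B j.+1) ->
  (forall j, prof (blk a (B j) (B j.+1)) = prof (blk b (j * d) (j.+1 * d))) ->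
  L a -> L b.

Section Construction.
Variables (g : nat -> nat) (tau : seq SI -> SO) (a0 : SI) (o0 : SO).
Hypothesis gpos : is_delay g.
Let d := 2 ^ #|P|.
Let ell := lookahead g.

Lemma d_gt0 : 0 < d. Proof. by rewrite expn_gt0. Qed.

Lemma ell_S n : ell n.+1 = ell n + g n.+1.
Proof. by rewrite /ell /lookahead big_ord_recr. Qed.

Lemma ell_gt n : n < ell n.
Proof.
elim: n => [|n IH]; first by rewrite /ell /lookahead big_ord1 gpos.
by rewrite ell_S -addn1 leq_add.
Qed.

Lemma ell_mono m n : m <= n -> ell m <= ell n.
Proof.
move/subnK <-; elim: (n - m) => [//|k IH].
by rewrite addSn ell_S (leq_trans IH) // leq_addr.
Qed.

Lemma rep_ex x m : exists y, typ y = typ x /\ (d <= size x -> m <= size y).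
Proof.
case: (leqP d (size x)) => h.
  by have [y [h1 h2]] := pump m h; exists y.
by exists x; split => // h'; move: h; rewrite ltnNge h'.
Qed.
Definition rep x m := proj1_sig (constructive_indefinite_description _ (rep_ex x m)).
Lemma rep_spec x m : typ (rep x m) = typ x /\ (d <= size x -> m <= size (rep x m)).
Proof. exact: (proj2_sig (constructive_indefinite_description _ (rep_ex x m))). Qed.

Lemma wit_ex x p : exists w : seq SO, p \in typ x -> size w = size x /\ prof (zip x w) = p.
Proof.
case: (boolP (p \in typ x)) => h; last by exists [::].
by have /memtP [w hw] := h; exists w.
Qed.
Definition wit x p := proj1_sig (constructive_indefinite_description _ (wit_ex x p)).
Lemma wit_spec x p : p \in typ x -> size (wit x p) = size x /\ prof (zip x (wit x p)) = p.
Proof. exact: (proj2_sig (constructive_indefinite_description _ (wit_ex x p))). Qed.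

Definition Xb (al : nat -> SI) j := mkseq (fun i => al (j * d + i)) d.
Fixpoint Bv (al : nat -> SI) j :=
  if j is j'.+1 then Bv al j' + size (rep (Xb al j') (ell (Bv al j'))) else 0.
Definition beta al j := rep (Xb al j) (ell (Bv al j)).
Definition virt al n := nth a0 (flatten (mkseq (beta al) n.+1)) n.
Definition vout al j :=
  mkseq (fun k => tau (mkseq (virt al) (ell (Bv al j + k)))) (size (beta al j)).
Definition wout al j := wit (Xb al j) (prof (zip (beta al j) (vout al j))).
Definition realO al n := nth o0 (wout al (n %/ d)) (n %% d).

Lemma size_beta al j : ell (Bv al j) <= size (beta al j).
Proof. by have [_ ] := rep_spec (Xb al j) (ell (Bv al j)); apply; rewrite size_mkseq. Qed.

Lemma typ_beta al j : typ (beta al j) = typ (Xb al j).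
Proof. by have [] := rep_spec (Xb al j) (ell (Bv al j)). Qed.

Lemma Bv_S al j : Bv al j.+1 = Bv al j + size (beta al j).
Proof. by []. Qed.

Lemma Bv_lt al j : Bv al j < Bv al j.+1.
Proof.
rewrite Bv_S -{1}(addn0 (Bv al j)) ltn_add2l.
exact: leq_ltn_trans (leq0n _) (leq_trans (ell_gt _) (size_beta al j)).
Qed.

Lemma Bv_ge al j : j <= Bv al j.
Proof. by elim: j => // j IH; apply: leq_ltn_trans IH (Bv_lt al j). Qed.

Lemma size_flat al K : size (flatten (mkseq (beta al) K)) = Bv al K.
Proof. by elim: K => // K IH; rewrite mkseqS flatten_rcons size_cat IH. Qed.

Lemma flat_ext al K k : exists s,
  flatten (mkseq (beta al) (K + k)) = flatten (mkseq (beta al) K) ++ s.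
Proof.
elim: k => [|k [s IH]]; first by exists [::]; rewrite addn0 cats0.
by exists (s ++ beta al (K + k)); rewrite addnS mkseqS flatten_rcons IH catA.
Qed.

Lemma flat_nth al K K' n : n < Bv al K -> n < Bv al K' ->
  nth a0 (flatten (mkseq (beta al) K)) n = nth a0 (flatten (mkseq (beta al) K')) n.
Proof.
wlog h : K K' / K <= K'.
  move=> W h1 h2; case: (leqP K K') => h; first exact: W.
  by symmetry; apply: W => //; apply: ltnW.
move=> h1 _; rewrite -(subnKC h); have [s ->] := flat_ext al K (K' - K).
by rewrite nth_cat size_flat h1.
Qed.

Lemma virtE al K n : n < Bv al K -> virt al n = nth a0 (flatten (mkseq (beta al) K)) n.
Proof. by move=> h; apply: flat_nth => //; apply: leq_trans (Bv_ge al n.+1). Qed.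

Lemma virt_blk al j i : i < size (beta al j) -> virt al (Bv al j + i) = nth a0 (beta al j) i.
Proof.
move=> hi; rewrite (virtE (K := j.+1)); last by rewrite Bv_S ltn_add2l.
by rewrite mkseqS flatten_rcons nth_cat size_flat ltnNge leq_addr /= addKn.
Qed.

Lemma zip_mk (s : seq SI) (t : seq SO) : size s = size t ->
  zip s t = mkseq (fun i => (nth a0 s i, nth o0 t i)) (size s).
Proof.
move=> h; apply: (@eq_from_nth _ (a0, o0)); first by rewrite size_zip size_mkseq h minnn.
by move=> i; rewrite size_zip -h minnn => hi; rewrite nth_zip // nth_mkseq.
Qed.

Lemma virt_block al j :
  blk (fun n => (virt al n, tau (mkseq (virt al) (ell n)))) (Bv al j) (Bv al j.+1)
  = zip (beta al j) (vout al j).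
Proof.
rewrite zip_mk; last by rewrite size_mkseq.
rewrite /blk Bv_S addKn; apply: eq_mkseq_in => i hi.
by rewrite virt_blk // /vout nth_mkseq.
Qed.

Lemma wout_spec al j : size (wout al j) = d /\
  prof (zip (Xb al j) (wout al j)) = prof (zip (beta al j) (vout al j)).
Proof.
have h : prof (zip (beta al j) (vout al j)) \in typ (Xb al j).
  by rewrite -typ_beta; apply/memtP; exists (vout al j); rewrite size_mkseq.
by have [-> ->] := wit_spec h; rewrite size_mkseq.
Qed.

Lemma real_block al j :
  blk (fun n => (al n, realO al n)) (j * d) (j.+1 * d) = zip (Xb al j) (wout al j).
Proof.
have [sw _] := wout_spec al j.
rewrite zip_mk; last by rewrite sw size_mkseq.
rewrite /blk mulSn addnK size_mkseq; apply: eq_mkseq_in => i hi.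
rewrite /realO divnMDl ?d_gt0 // divn_small // addn0 modnMDl modn_small //.
by rewrite /Xb nth_mkseq.
Qed.

Lemma real_win : (forall al, L (fun n => (al n, tau (mkseq al (ell n))))) ->
  forall al, L (fun n => (al n, realO al n)).
Proof.
move=> H al; apply: (transfer (d := d) (B := Bv al) _ _ _ _ (H (virt al))) => //.
- exact: d_gt0.
- exact: Bv_lt.
move=> j; rewrite virt_block real_block.
by have [_ ->] := wout_spec al j.
Qed.

Section Loc.
Variables (al1 al2 : nat -> SI) (K : nat).
Hypothesis agree : forall i, i < K * d -> al1 i = al2 i.

Lemma Xb_loc j : j < K -> Xb al1 j = Xb al2 j.
Proof.
move=> hj; apply: eq_mkseq_in => i hi; apply: agree.
apply: (@leq_trans (j.+1 * d)); last by rewrite leq_mul2r hj orbT.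
by rewrite mulSn [d + _]addnC ltn_add2l.
Qed.

Lemma Bv_loc j : j <= K -> Bv al1 j = Bv al2 j.
Proof.
elim: j => [//|j IH] hj /=; rewrite IH ?(ltnW hj) //.
by rewrite Xb_loc.
Qed.

Lemma beta_loc j : j < K -> beta al1 j = beta al2 j.
Proof. by move=> hj; rewrite /beta Xb_loc // Bv_loc // ltnW. Qed.

Lemma virt_loc n : n < Bv al1 K -> virt al1 n = virt al2 n.
Proof.
move=> hn; rewrite (virtE (K := K)) // (virtE (al := al2) (K := K)) -?Bv_loc //.
by congr nth; congr flatten; apply: eq_mkseq_in => i hi; rewrite beta_loc.
Qed.
End Loc.

Lemma wout_loc al1 al2 j : (forall i, i < j.+2 * d -> al1 i = al2 i) ->
  wout al1 j = wout al2 j.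
Proof.
move=> H.
have eb : beta al1 j = beta al2 j by apply: beta_loc H _ _.
have eB : Bv al1 j = Bv al2 j by apply: Bv_loc H _ _; rewrite ltnW.
have ev : vout al1 j = vout al2 j.
  rewrite /vout eb eB; apply: eq_mkseq_in => k hk; congr tau.
  apply: eq_mkseq_in => i hi; apply: (virt_loc H).
  apply: (leq_trans hi); apply: (@leq_trans (ell (Bv al1 j.+1))).
    by apply: ell_mono; rewrite Bv_S eB eb leq_add2l ltnW.
  apply: (leq_trans (size_beta al1 j.+1)).
  by rewrite (Bv_S al1 j.+1) leq_addl.
by rewrite /wout ev eb (Xb_loc H).
Qed.
End Construction.

Lemma lookahead_const (k n : nat) :
  lookahead (fun i => if i is 0 then k else 1) n = k + n.
Proof.
rewrite /lookahead big_ord_recl /=; congr addn.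
by rewrite (eq_bigr (fun _ => 1)) // sum1_card card_ord.
Qed.

Theorem abstract_main : (exists g, is_delay g /\ winsO g L) ->
  winsO (fun i => if i is 0 then 2 ^ (#|P|).+1 else 1) L.
Proof.
move=> [g [gpos [tau win]]].
case: (pickP (predT : pred SI)) => [a0 _|emp]; last first.
  by exists tau => al; have := emp (al 0).
pose o0 := tau [::].
pose d := 2 ^ #|P|.
pose tau' (s : seq SI) := realO g tau a0 o0 (fun i => nth a0 s i) (size s - 2 ^ (#|P|).+1).
exists tau' => al.
have := real_win a0 o0 gpos win al.
suff -> : (fun n => (al n, realO g tau a0 o0 al n)) =
          (fun n => (al n, tau' (mkseq al (lookahead (fun i => if i is 0 then 2 ^ (#|P|).+1 else 1) n)))) by [].
apply: functional_extensionality => n; congr pair.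
rewrite lookahead_const /tau' size_mkseq addKn.
rewrite /realO; congr nth; apply: (wout_loc _ _ gpos) => i hi; rewrite nth_mkseq //.
apply: (leq_trans hi); rewrite expnS !mulSn mul0n addn0 addnA leq_add2l.
exact: leq_divM.
Qed.
End Abstract.

Lemma mkseq_cons (T : Type) (f : nat -> T) n : mkseq f n.+1 = f 0 :: mkseq (fun i => f i.+1) n.
Proof.
apply: (@eq_from_nth _ (f 0)); first by rewrite size_mkseq /= size_mkseq.
move=> i; rewrite size_mkseq => hi; rewrite nth_mkseq //.
by case: i hi => [|i] hi //=; rewrite nth_mkseq.
Qed.

Lemma mem_mkseqP (T : eqType) (f : nat -> T) n x :
  reflect (exists2 i, i < n & f i = x) (x \in mkseq f n).
Proof.
apply: (iffP mapP) => [[i]|[i hi <-]]; first by rewrite mem_iota => hi ->; exists i.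
by exists i; rewrite // mem_iota.
Qed.

Lemma bcover (B : nat -> nat) : B 0 = 0 -> (forall j, B j < B j.+1) ->
  forall n, exists j, B j <= n < B j.+1.
Proof.
move=> B0 Bi n.
have Bge : forall j, j <= B j by elim=> // j IH; apply: leq_ltn_trans IH (Bi j).
have ex : exists j, B j <= n by exists 0; rewrite B0.
have ub : forall j, B j <= n -> j <= n by move=> j h; apply: leq_trans (Bge j) h.
case: (ex_maxnP ex ub) => j hj hmax; exists j; rewrite hj /=.
by rewrite ltnNge; apply/negP => /hmax; rewrite ltnn.
Qed.

Section Det.
Variables (SI SO Q : finType) (q0 : Q) (delta : Q -> SI * SO -> Q) (F : {set {set Q}}).

Fixpoint dblk q (l : seq (SI * SO)) : Q * {set Q} :=
  if l is a :: l' then ((dblk (delta q a) l').1, q |: (dblk (delta q a) l').2) else (q, set0).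
Definition profD l : {ffun Q -> Q * {set Q}} := [ffun q => dblk q l].
Definition combD (p1 p2 : {ffun Q -> Q * {set Q}}) : {ffun Q -> Q * {set Q}} :=
  [ffun q => ((p2 (p1 q).1).1, (p1 q).2 :|: (p2 (p1 q).1).2)].

Lemma dblk_cat q l1 l2 : dblk q (l1 ++ l2) =
  ((dblk (dblk q l1).1 l2).1, (dblk q l1).2 :|: (dblk (dblk q l1).1 l2).2).
Proof.
elim: l1 q => [|a l1 IH] q /=; first by rewrite set0U -surjective_pairing.
by rewrite IH /= setUA.
Qed.

Lemma profD_cat l1 l2 : profD (l1 ++ l2) = combD (profD l1) (profD l2).
Proof. by apply/ffunP => q; rewrite !ffunE dblk_cat. Qed.

Section Run.
Variable c : nat -> SI * SO.
Let r := det_run q0 delta c.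

Lemma dblk_run s n : dblk (r s) (mkseq (fun i => c (s + i)) n) =
  (r (s + n), [set x in mkseq (fun i => r (s + i)) n]).
Proof.
elim: n s => [|n IH] s.
  by rewrite addn0 /=; congr pair; apply/setP => x; rewrite !inE.
rewrite !mkseq_cons /= addn0.
have -> : (fun i => c (s + i.+1)) = (fun i => c (s.+1 + i)).
  by apply: functional_extensionality => i; rewrite addSnnS.
have -> : (fun i => r (s + i.+1)) = (fun i => r (s.+1 + i)).
  by apply: functional_extensionality => i; rewrite addSnnS.
have -> : delta (r s) (c s) = r s.+1 by [].
by rewrite IH addSnnS set_cons.
Qed.

Variable B : nat -> nat.
Hypothesis B0 : B 0 = 0.
Hypothesis Bi : forall j, B j < B j.+1.
Let pi j := profD (blk c (B j) (B j.+1)).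
Fixpoint stp (p : nat -> {ffun Q -> Q * {set Q}}) j :=
  if j is j'.+1 then (p j' (stp p j')).1 else q0.

Lemma pi_run j : pi j (r (B j)) =
  (r (B j.+1), [set x in mkseq (fun i => r (B j + i)) (B j.+1 - B j)]).
Proof. by rewrite /pi ffunE dblk_run subnKC // ltnW. Qed.

Lemma stp_run j : stp pi j = r (B j).
Proof. by elim: j => [|j IH] /=; [rewrite B0 | rewrite IH pi_run]. Qed.

Lemma occ_pi q : occ r q <-> exists j, q \in (pi j (stp pi j)).2.
Proof.
split.
  move=> [n <-]; have [j /andP [h1 h2]] := bcover B0 Bi n.
  exists j; rewrite stp_run pi_run inE; apply/mem_mkseqP; exists (n - B j).
    by rewrite ltn_sub2r.
  by rewrite subnKC.
move=> [j]; rewrite stp_run pi_run inE => /mem_mkseqP [i _ <-].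
by exists (B j + i).
Qed.

Lemma dwm_pi : dwm_lang q0 delta F c <->
  exists S, S \in F /\ forall q, q \in S <-> exists j, q \in (pi j (stp pi j)).2.
Proof.
split => -[S [hS H]]; exists S; split => // q; rewrite H; first exact: occ_pi.
by split => /occ_pi.
Qed.
End Run.

Lemma stp_ext p1 p2 : (forall j, p1 j = p2 j) -> forall j, stp p1 j = stp p2 j.
Proof. by move=> H; elim=> //= j ->; rewrite H. Qed.

Lemma transferD (a b : nat -> SI * SO) (B : nat -> nat) (d : nat) :
  0 < d -> B 0 = 0 -> (forall j, B j < B j.+1) ->
  (forall j, profD (blk a (B j) (B j.+1)) = profD (blk b (j * d) (j.+1 * d))) ->
  dwm_lang q0 delta F a -> dwm_lang q0 delta F b.
Proof.
move=> d0 B0 Bi E.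
have Bd0 : (fun j => j * d) 0 = 0 by [].
have Bdi : forall j, (fun j => j * d) j < (fun j => j * d) j.+1.
  by move=> j /=; rewrite mulSn -{1}(add0n (j * d)) ltn_add2r.
move/(dwm_pi _ B0 Bi) => [S [hS H]]; apply/(dwm_pi _ Bd0 Bdi); exists S; split => // q.
rewrite H; split => -[j hj]; exists j; move: hj;
  by rewrite (stp_ext E) E.
Qed.
End Det.

Section NDet.
Variables (SI SO Q : finType) (q0 : Q) (Delta : Q -> SI * SO -> Q -> bool) (F : {set {set Q}}).

Fixpoint nrun (q : Q) (l : seq (SI * SO)) (q' : Q) (V : {set Q}) : bool :=
  if l is a :: l' then
    [exists q1, exists V1 : {set Q}, [&& Delta q a q1, nrun q1 l' q' V1 & V == q |: V1]]
  else (q' == q) && (V == set0).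

Definition profN l : {set Q * Q * {set Q}} := [set x | nrun x.1.1 l x.1.2 x.2].
Definition combN (R1 R2 : {set Q * Q * {set Q}}) : {set Q * Q * {set Q}} :=
  [set x | [exists q1, exists V1, exists V2,
     [&& ((x.1.1, q1), V1) \in R1, ((q1, x.1.2), V2) \in R2 & x.2 == V1 :|: V2]]].

Lemma nrun_catP q l1 l2 q' V : nrun q (l1 ++ l2) q' V <->
  exists q1 V1 V2, nrun q l1 q1 V1 /\ nrun q1 l2 q' V2 /\ V = V1 :|: V2.
Proof.
elim: l1 q V => [|a l1 IH] q V /=.
  split; first by move=> h; exists q, set0, V; rewrite !eqxx set0U.
  by move=> [q1 [V1 [V2 [/andP [/eqP -> /eqP ->] [h ->]]]]]; rewrite set0U.
split.
  move=> /existsP [q2 /existsP [V' /and3P [hd /IH [q1 [V1 [V2 [h1 [h2 ->]]]]] /eqP ->]]].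
  exists q1, (q |: V1), V2; split; last by rewrite setUA.
  by apply/existsP; exists q2; apply/existsP; exists V1; rewrite hd h1 eqxx.
move=> [q1 [V1 [V2 [/existsP [q2 /existsP [V1' /and3P [hd h1 /eqP ->]]] [h2 ->]]]]].
apply/existsP; exists q2; apply/existsP; exists (V1' :|: V2); rewrite hd -setUA eqxx andbT /=.
by apply/IH; exists q1, V1', V2.
Qed.

Lemma profN_cat l1 l2 : profN (l1 ++ l2) = combN (profN l1) (profN l2).
Proof.
apply/setP => -[[q q'] V]; rewrite !inE /=; apply/idP/idP.
  move/nrun_catP => [q1 [V1 [V2 [h1 [h2 ->]]]]].
  by apply/existsP; exists q1; apply/existsP; exists V1; apply/existsP; exists V2; rewrite !inE h1 h2 eqxx.
move=> /existsP [q1 /existsP [V1 /existsP [V2]]]; rewrite !inE /= => /and3P [h1 h2 /eqP ->].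
by apply/nrun_catP; exists q1, V1, V2.
Qed.

Lemma nrun_of_run (c : nat -> SI * SO) (rho : nat -> Q) s n :
  (forall i, i < n -> Delta (rho (s + i)) (c (s + i)) (rho (s + i).+1)) ->
  nrun (rho s) (mkseq (fun i => c (s + i)) n) (rho (s + n)) [set x in mkseq (fun i => rho (s + i)) n].
Proof.
elim: n s => [|n IH] s H.
  by rewrite /= addn0 eqxx /=; apply/eqP/setP => x; rewrite !inE.
rewrite !mkseq_cons /=; apply/existsP; exists (rho s.+1).
apply/existsP; exists [set x in mkseq (fun i => rho (s.+1 + i)) n].
have -> : (fun i => c (s + i.+1)) = (fun i => c (s.+1 + i)).
  by apply: functional_extensionality => i; rewrite addSnnS.
have -> : (fun i => rho (s + i.+1)) = (fun i => rho (s.+1 + i)).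
  by apply: functional_extensionality => i; rewrite addSnnS.
have := H 0 (ltn0Sn _); rewrite !addn0 => ->.
rewrite -addSnnS IH ?set_cons ?eqxx // => i hi.
by have := H i.+1 hi; rewrite addnS addSn.
Qed.

Lemma run_of_nrun x0 l : forall q q' V, nrun q l q' V -> exists rho : nat -> Q,
  [/\ rho 0 = q, rho (size l) = q',
      (forall i, i < size l -> Delta (rho i) (nth x0 l i) (rho i.+1)) &
      V = [set x in mkseq rho (size l)]].
Proof.
elim: l => [|a l IH] q q' V /=.
  move=> /andP [/eqP -> /eqP ->]; exists (fun _ => q); split => //.

move=> /existsP [q1 /existsP [V1 /and3P [hd /IH [rho [h0 hs ht hV]] /eqP ->]]].
exists (fun i => if i is i'.+1 then rho i' else q); split => //.
- by move=> [|i] hi /=; [rewrite h0 | apply: ht].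
- by rewrite mkseq_cons hV set_cons.
Qed.

Lemma modS_div d n : 0 < d ->
  ((n.+1 %/ d = n %/ d) /\ (n.+1 %% d = (n %% d).+1) /\ (n %% d).+1 < d) \/
  ((n.+1 %/ d = (n %/ d).+1) /\ (n.+1 %% d = 0) /\ (n %% d).+1 = d).
Proof.
move=> d0; have hm := ltn_pmod n d0.
have en : n.+1 = n %/ d * d + (n %% d).+1 by rewrite {1}(divn_eq n d) addnS.
case: (ltngtP (n %% d).+1 d) => h.
- left; rewrite en divnMDl // modnMDl (divn_small h) (modn_small h) addn0; do !split.
- by move: h; rewrite ltnS leqNgt hm.
- right; rewrite en h (_ : n %/ d * d + d = (n %/ d).+1 * d + 0); last by rewrite mulSn addn0 addnC.
  by rewrite divnMDl // modnMDl div0n mod0n addn0; do !split.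
Qed.

Lemma transferN (a b : nat -> SI * SO) (B : nat -> nat) (d : nat) :
  0 < d -> B 0 = 0 -> (forall j, B j < B j.+1) ->
  (forall j, profN (blk a (B j) (B j.+1)) = profN (blk b (j * d) (j.+1 * d))) ->
  nwm_lang q0 Delta F a -> nwm_lang q0 Delta F b.
Proof.
move=> d0 B0 Bi E [r [r0 [rt [S [hS hocc]]]]].
pose V j := [set x in mkseq (fun i => r (B j + i)) (B j.+1 - B j)].
have H j : exists rho : nat -> Q,
  [/\ rho 0 = r (B j), rho d = r (B j.+1),
      (forall i, i < d -> Delta (rho i) (b (j * d + i)) (rho i.+1)) &
      V j = [set x in mkseq rho d]].
  have : ((r (B j), r (B j.+1)), V j) \in profN (blk a (B j) (B j.+1)).
    rewrite inE /= /blk /V.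
    have {2}-> : B j.+1 = B j + (B j.+1 - B j) by rewrite subnKC // ltnW.
    by apply: nrun_of_run => i _; apply: rt.
  rewrite E inE /= /blk mulSn addnK => /(run_of_nrun (b 0)) [rho []].
  rewrite size_mkseq => h0 hd ht hV; exists rho; split => // i hi.
  by have := ht i hi; rewrite nth_mkseq.
pose rho j := proj1_sig (constructive_indefinite_description _ (H j)).
have Hr j : [/\ rho j 0 = r (B j), rho j d = r (B j.+1),
      (forall i, i < d -> Delta (rho j i) (b (j * d + i)) (rho j i.+1)) &
      V j = [set x in mkseq (rho j) d]].
  exact: (proj2_sig (constructive_indefinite_description _ (H j))).
pose r' n := rho (n %/ d) (n %% d).
have r'E j i : i < d -> r' (j * d + i) = rho j i.
  by move=> hi; rewrite /r' divnMDl // divn_small // addn0 modnMDl modn_small.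
have r'S n : r' n.+1 = rho (n %/ d) (n %% d).+1.
  case: (modS_div n d0) => -[e1 [e2 h]]; first by rewrite /r' e1 e2.
  have [h0 _ _ _] := Hr (n %/ d).+1; have [_ hd _ _] := Hr (n %/ d).
  by rewrite /r' e1 e2 h h0 hd.
exists r'; split; first by rewrite /r' div0n mod0n; have [-> _ _ _] := Hr 0; rewrite B0.
split.
  move=> n; rewrite r'S; have [_ _ ht _] := Hr (n %/ d).
  by have := ht _ (ltn_pmod n d0); rewrite -divn_eq.
exists S; split => // q; rewrite hocc; split.
  move=> [n <-]; have [j /andP [h1 h2]] := bcover B0 Bi n.
  have : r n \in V j.
    rewrite inE; apply/mem_mkseqP; exists (n - B j); first by rewrite ltn_sub2r.
    by rewrite subnKC.
  have [_ _ _ ->] := Hr j; rewrite inE => /mem_mkseqP [i hi <-].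
  by exists (j * d + i); rewrite r'E.
move=> [n <-]; have : r' n \in V (n %/ d).
  have [_ _ _ ->] := Hr (n %/ d); rewrite inE; apply/mem_mkseqP.
  by exists (n %% d); rewrite ?ltn_pmod.
rewrite inE => /mem_mkseqP [i _ <-]; by exists (B (n %/ d) + i).
Qed.
End NDet.

Lemma polyn_eq k : polyn [:: 1; 3; 2] k = 1 + 3 * k + 2 * k ^ 2.
Proof. by rewrite /polyn /= !big_ord_recr big_ord0 /= expn0 expn1 muln1. Qed.

Lemma leq_expl a b e : a <= b -> a ^ e <= b ^ e.
Proof. by move=> h; elim: e => // e IH; rewrite !expnS leq_mul. Qed.

Lemma le2S x y : x <= 2 ^ y -> x.+1 <= 2 ^ y.+1.
Proof. by move=> h; rewrite expnS mul2n -addnn -addn1 leq_add // expn_gt0. Qed.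

Lemma k_le k : k <= 2 ^ k.
Proof. exact: ltnW (ltn_expl k (ltnSn 1)). Qed.

Lemma const_is (k : nat) : 0 < k ->
  is_const_delay (fun i => if i is 0 then k else 1).
Proof. by move=> h; split; [case | case]. Qed.

Theorem theorem2 :
  exists cs : seq nat,
    (forall (SI SO Q : finType) (q0 : Q) (delta : Q -> SI * SO -> Q)
            (F : {set {set Q}}),
       (exists g, is_delay g /\ winsO g (dwm_lang q0 delta F)) <->
       (exists f, is_const_delay f /\ f 0 <= 2 ^ (2 ^ polyn cs #|Q|)
                  /\ winsO f (dwm_lang q0 delta F)))
    /\
    (forall (SI SO Q : finType) (q0 : Q) (Delta : Q -> SI * SO -> Q -> bool)
            (F : {set {set Q}}),
       (exists g, is_delay g /\ winsO g (nwm_lang q0 Delta F)) <->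
       (exists f, is_const_delay f /\ f 0 <= 2 ^ (2 ^ (2 ^ polyn cs #|Q|))
                  /\ winsO f (nwm_lang q0 Delta F))).
Proof.
exists [:: 1; 3; 2]; split.
  move=> SI SO Q q0 delta F; split; last first.
    by move=> [f [[hf _] [_ w]]]; exists f.
  move=> H.
  have := abstract_main (@profD_cat SI SO Q delta) (transferD (q0:=q0) (delta:=delta) (F:=F)) H.
  move=> w.
  eexists; split; last split; last exact: w.
    by split; case => //=; rewrite expn_gt0.
  rewrite /= leq_exp2l // polyn_eq -addnA add1n; apply: le2S.
  rewrite card_ffun card_prod.
  apply: (@leq_trans ((2 ^ #|Q| * 2 ^ #|Q|) ^ #|Q|)).
    by apply: leq_expl; apply: leq_mul; [apply: k_le | apply: card_setle].
  rewrite -expnD -expnM leq_exp2l // addnn -mul2n expnS mulnA.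
  by rewrite -mulnA mulnn leq_addl.
move=> SI SO Q q0 Delta F; split; last first.
  by move=> [f [[hf _] [_ w]]]; exists f.
move=> H.
have := abstract_main (@profN_cat SI SO Q Delta) (transferN (q0:=q0) (Delta:=Delta) (F:=F)) H.
move=> w.
eexists; split; last split; last exact: w.
  by split; case => //=; rewrite expn_gt0.
rewrite /= leq_exp2l //.
have h1 := le2S (card_setle (Q * Q * {set Q})%type).
apply: (leq_trans h1).
rewrite leq_exp2l // polyn_eq !card_prod.
apply: (@leq_trans (2 ^ (3 * #|Q|).+1)); last first.
  by rewrite leq_exp2l // -addnA add1n ltnS leq_addr.
apply: le2S; rewrite mulSn mulSn mul1n !expnD.
rewrite mulnA; apply: leq_mul; [apply: leq_mul; apply: k_le | apply: card_setle].
Qed.
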